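(* For each $y\in\mathbb Y$ such that the Riccati equations with parameter $y$ have a global solution $(\Phi_y,\Psi_y)$, the Volterra integral operator $$\mathcal I_y:C(\mathbb R_+)\to\{h\in C^1(\mathbb R_+):h(0)=0\},\qquad \mathcal I_y(\theta)(\tau)=\int_0^\tau\theta(s)\langle\Psi_y'(\tau-s),e_1\rangle ds,$$ is well defined and bijective.
   Context: $d\ge1$, $e_1$ the first canonical basis vector of $\mathbb R^d$, $\langle\cdot,\cdot\rangle$ the Euclidean inner product. For a parameter $y$ there are symmetric positive semidefinite $a_y,\alpha_y^1,\dots,\alpha_y^d\in\mathbb R^{d\times d}$ and $b_y,\beta_y^1,\dots,\beta_y^d\in\mathbb R^d$. Fix $\lambda\in\mathbb R^d$ with $\langle\lambda,e_1\rangle\ne0$. With $F_y(u)=\tfrac12\langle u,a_yu\rangle+\langle u,b_y\rangle$ and $R_y^i(u)=\tfrac12\langle u,\alpha_y^iu\rangle+\langle u,\beta_y^i\rangle$, the Riccati equations are $\Phi_y'=F_y\circ\Psi_y$, $\Phi_y(0)=0$, $\Psi_y'=R_y\circ\Psi_y-\lambda$, $\Psi_y(0)=0$, with $\Phi_y\in C^\infty(\mathbb R_+)$, $\Psi_y\in C^\infty(\mathbb R_+;\mathbb R^d)$. *)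

(* Defs.v *)
From Stdlib Require Import Reals Lra ClassicalEpsilon.
Open Scope R_scope.

(* Vectors of R^d are functions nat -> R (only indices i < d matter);
   d x d matrices are functions nat -> nat -> R. *)

Fixpoint rsum (n : nat) (f : nat -> R) : R :=
  match n with O => 0 | S k => rsum k f + f k end.

Definition dot (d : nat) (u v : nat -> R) : R := rsum d (fun i => u i * v i).

Definition matvec (d : nat) (m : nat -> nat -> R) (u : nat -> R) : nat -> R :=
  fun i => rsum d (fun j => m i j * u j).

Definition e1 : nat -> R := fun i => match i with O => 1 | _ => 0 end.

Definition symmetric_psd (d : nat) (m : nat -> nat -> R) : Prop :=
  (forall i j, (i < d)%nat -> (j < d)%nat -> m i j = m j i) /\
  (forall u : nat -> R, 0 <= dot d u (matvec d m u)).

Definition quadf (d : nat) (a : nat -> nat -> R) (b : nat -> R) (u : nat -> R) : R :=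
  / 2 * dot d u (matvec d a u) + dot d u b.

Definition cont_Rplus (f : R -> R) : Prop :=
  forall t, 0 <= t -> forall eps, 0 < eps -> exists delta, 0 < delta /\
    forall s, 0 <= s -> Rabs (s - t) < delta -> Rabs (f s - f t) < eps.

Definition deriv_Rplus (f f' : R -> R) : Prop :=
  forall t, 0 <= t -> forall eps, 0 < eps -> exists delta, 0 < delta /\
    forall h, h <> 0 -> Rabs h < delta -> 0 <= t + h ->
      Rabs ((f (t + h) - f t) / h - f' t) < eps.

Definition C1_Rplus (f : R -> R) : Prop :=
  exists f', deriv_Rplus f f' /\ cont_Rplus f'.

Definition Cinf_Rplus (f : R -> R) : Prop :=
  exists D : nat -> R -> R, (forall t, 0 <= t -> D O t = f t) /\
    forall k, deriv_Rplus (D k) (D (S k)).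

(* Riemann integral as a total function: the value of the Riemann integral
   of f over [a,b] when f is Riemann integrable there (0 otherwise). *)
Definition RInt (f : R -> R) (a b : R) : R :=
  epsilon (inhabits 0) (fun v => exists pr : Riemann_integrable f a b, RiemannInt pr = v).

(* Volterra operator I(theta)(tau) = int_0^tau theta(s) <Psi'(tau - s), e1> ds,
   where dPsi1 = <Psi', e1>. *)
Definition volterra (dPsi1 theta : R -> R) (tau : R) : R :=
  RInt (fun s => theta s * dPsi1 (tau - s)) 0 tau.

(* Main.v *)
Require Import Defs.
From Stdlib Require Import Reals Lra Lia ClassicalEpsilon.
From Coquelicot Require Import Coquelicot.
Open Scope R_scope.

Lemma rsum_ext n f g : (forall i, (i < n)%nat -> f i = g i) -> rsum n f = rsum n g.
Proof.
  induction n; simpl; intros H; auto.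
  rewrite IHn; [rewrite H; auto|]. intros i Hi; apply H; lia.
Qed.

Lemma rsum_e1 n v : (1 <= n)%nat -> rsum n (fun i => v i * e1 i) = v O.
Proof.
  induction n; intros H; [lia|]. simpl.
  destruct n. simpl. ring.
  rewrite IHn by lia. simpl. ring.
Qed.

Lemma dot_e1 d v : (1 <= d)%nat -> dot d v e1 = v O.
Proof. intros; unfold dot; apply rsum_e1; auto. Qed.

Lemma rsum_zero n : rsum n (fun _ => 0) = 0.
Proof. induction n; simpl; auto; rewrite IHn; ring. Qed.

Lemma quadf_zero d a b u : (forall i, (i < d)%nat -> u i = 0) -> quadf d a b u = 0.
Proof.
  intros H. unfold quadf, dot.
  rewrite (rsum_ext d (fun i => u i * matvec d a u i) (fun _ => 0)).
  rewrite (rsum_ext d (fun i => u i * b i) (fun _ => 0)).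
  rewrite rsum_zero; ring.
  intros i Hi; rewrite H; auto; ring.
  intros i Hi; rewrite H; auto; ring.
Qed.

Lemma deriv_Rplus_cont f f' : deriv_Rplus f f' -> cont_Rplus f.
Proof.
  intros H t Ht eps Heps.
  destruct (H t Ht 1 Rlt_0_1) as [del [Hdel Hd]].
  exists (Rmin del (eps / (Rabs (f' t) + 1))). split.
  { apply Rmin_pos; auto. apply Rdiv_lt_0_compat; auto. pose proof (Rabs_pos (f' t)); lra. }
  intros s Hs Hst.
  destruct (Req_dec s t) as [->|Hne].
  { rewrite Rminus_diag, Rabs_R0; auto. }
  set (h := s - t).
  assert (Hh : h <> 0) by (unfold h; lra).
  assert (Hm1 := Rmin_l del (eps / (Rabs (f' t) + 1))).
  assert (Hm2 := Rmin_r del (eps / (Rabs (f' t) + 1))).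
  specialize (Hd h Hh ltac:(unfold h; lra) ltac:(unfold h; lra)).
  replace (t + h) with s in Hd by (unfold h; ring).
  assert (Hq : Rabs ((f s - f t) / h) < Rabs (f' t) + 1).
  { assert (Hx := Rabs_triang ((f s - f t) / h - f' t) (f' t)).
    replace ((f s - f t) / h - f' t + f' t) with ((f s - f t) / h) in Hx by ring. lra. }
  replace (f s - f t) with (h * ((f s - f t) / h)) by (field; auto).
  rewrite Rabs_mult.
  assert (HA : 0 < Rabs (f' t) + 1) by (pose proof (Rabs_pos (f' t)); lra).
  assert (Hh2 : Rabs h < eps / (Rabs (f' t) + 1)) by (unfold h; lra).
  apply Rle_lt_trans with (Rabs h * (Rabs (f' t) + 1)).
  apply Rmult_le_compat_l; [apply Rabs_pos| lra].
  apply Rlt_le_trans with (eps / (Rabs (f' t) + 1) * (Rabs (f' t) + 1)).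
  apply Rmult_lt_compat_r; auto.
  right; field; lra.
Qed.

Lemma deriv_Rplus_unique f f1 g g1 : deriv_Rplus f f1 -> deriv_Rplus g g1 ->
  (forall t, 0 <= t -> f t = g t) -> forall t, 0 <= t -> f1 t = g1 t.
Proof.
  intros Hf Hg Heq t Ht.
  destruct (Req_dec (f1 t) (g1 t)) as [E|Hne]; auto. exfalso.
  set (e := Rabs (f1 t - g1 t) / 2).
  assert (He : 0 < e) by (unfold e; apply Rdiv_lt_0_compat; [apply Rabs_pos_lt; lra| lra]).
  destruct (Hf t Ht e He) as [d1 [Hd1 H1]].
  destruct (Hg t Ht e He) as [d2 [Hd2 H2]].
  set (h := Rmin d1 d2 / 2).
  assert (Hm1 := Rmin_l d1 d2). assert (Hm2 := Rmin_r d1 d2).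
  assert (Hmp : 0 < Rmin d1 d2) by (apply Rmin_pos; auto).
  assert (Hh : 0 < h) by (unfold h; lra).
  assert (Habs : Rabs h = h) by (apply Rabs_right; lra).
  specialize (H1 h ltac:(lra) ltac:(rewrite Habs; unfold h; lra) ltac:(lra)).
  specialize (H2 h ltac:(lra) ltac:(rewrite Habs; unfold h; lra) ltac:(lra)).
  rewrite (Heq (t + h)), (Heq t) in H1 by lra.
  assert (Hx := Rabs_triang ((g (t + h) - g t) / h - g1 t) (- ((g (t + h) - g t) / h - f1 t))).
  rewrite Rabs_Ropp in Hx.
  replace ((g (t + h) - g t) / h - g1 t + - ((g (t + h) - g t) / h - f1 t)) with (f1 t - g1 t) in Hx by ring.
  unfold e in *. lra.
Qed.

Lemma continuity_pt_intro f t :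
  (forall eps, 0 < eps -> exists del, 0 < del /\ forall s, Rabs (s - t) < del -> Rabs (f s - f t) < eps) ->
  continuity_pt f t.
Proof.
  intros H eps Heps. destruct (H eps Heps) as [del [Hd Hs]].
  exists del; split; auto. intros x [_ Hx]. apply Hs. exact Hx.
Qed.

Lemma Rmax0_lip s t : Rabs (Rmax 0 s - Rmax 0 t) <= Rabs (s - t).
Proof.
  unfold Rmax; destruct (Rle_dec 0 s); destruct (Rle_dec 0 t);
  unfold Rabs; repeat destruct Rcase_abs; lra.
Qed.

Lemma cont_ext f : cont_Rplus f -> forall t, continuity_pt (fun s => f (Rmax 0 s)) t.
Proof.
  intros H t. apply continuity_pt_intro. intros eps Heps.
  assert (Hx : 0 <= Rmax 0 t) by apply Rmax_l.
  destruct (H _ Hx eps Heps) as [del [Hd Hs]].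
  exists del; split; auto. intros s Hst. apply Hs. apply Rmax_l.
  eapply Rle_lt_trans; [apply Rmax0_lip| auto].
Qed.

Definition contR (f : R -> R) := forall t, continuity_pt f t.

Lemma cpt_of_derive f t l : is_derive f t l -> continuity_pt f t.
Proof.
  intros H. apply continuity_pt_filterlim. apply (ex_derive_continuous f t). exists l; auto.
Qed.

Lemma cpt_mult f g t : continuity_pt f t -> continuity_pt g t -> continuity_pt (fun x => f x * g x) t.
Proof. intros; apply (continuity_pt_mult f g t); auto. Qed.

Lemma cpt_minus f g t : continuity_pt f t -> continuity_pt g t -> continuity_pt (fun x => f x - g x) t.
Proof. intros; apply (continuity_pt_minus f g t); auto. Qed.

Lemma cpt_comp f g t : continuity_pt g t -> continuity_pt f (g t) -> continuity_pt (fun x => f (g x)) t.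
Proof. intros; apply (continuity_pt_comp g f t); auto. Qed.

Lemma cpt_const c t : continuity_pt (fun _ => c) t.
Proof. apply continuity_pt_const. intros x y; auto. Qed.

Lemma cpt_id t : continuity_pt (fun x => x) t.
Proof. apply derivable_continuous_pt. apply derivable_pt_id. Qed.

Lemma cpt_abs f t : continuity_pt f t -> continuity_pt (fun x => Rabs (f x)) t.
Proof. intros H. apply cpt_comp; auto. apply Rcontinuity_abs. Qed.

Lemma cpt_shift K x t : continuity_pt K (x - t) -> continuity_pt (fun s => K (x - s)) t.
Proof.
  intros H. apply (cpt_comp K (fun s => x - s)); auto.
  apply cpt_minus; [apply cpt_const|apply cpt_id].
Qed.

Lemma exRI f a b : contR f -> ex_RInt f a b.
Proof.
  intros H. apply (ex_RInt_continuous (V:=R_CompleteNormedModule)). intros z _. apply continuity_pt_filterlim. apply H.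
Qed.

Definition Eext (D D1 : R -> R) (t : R) := D (Rmax 0 t) + Rmin 0 t * D1 0.

Lemma Eext_deriv D D1 : deriv_Rplus D D1 -> forall t, is_derive (Eext D D1) t (D1 (Rmax 0 t)).
Proof.
  intros HD t. apply is_derive_Reals. intros eps Heps. unfold Eext.
  destruct (Rlt_le_dec 0 t) as [Ht|Ht].
  - destruct (HD t (Rlt_le _ _ Ht) eps Heps) as [del [Hdel H]].
    exists (mkposreal _ (Rmin_pos _ _ Hdel Ht)). simpl. intros h Hh Hha.
    assert (Hm1 := Rmin_l del t). assert (Hm2 := Rmin_r del t).
    assert (Hth : 0 < t + h) by (unfold Rabs in Hha; destruct Rcase_abs in Hha; lra).
    rewrite !Rmax_right, !Rmin_left by lra.
    replace (D (t + h) + 0 * D1 0 - (D t + 0 * D1 0)) with (D (t + h) - D t) by ring.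
    apply H; auto; lra.
  - destruct (Rle_lt_or_eq_dec _ _ Ht) as [Ht'|Ht'].
    + assert (Hp : 0 < - t) by lra.
      exists (mkposreal _ Hp). simpl. intros h Hh Hha.
      assert (Hth : t + h < 0) by (unfold Rabs in Hha; destruct Rcase_abs in Hha; lra).
      rewrite !Rmax_left, !Rmin_right by lra.
      replace ((D 0 + (t + h) * D1 0 - (D 0 + t * D1 0)) / h - D1 0) with 0 by (field; auto).
      rewrite Rabs_R0; auto.
    + subst t. destruct (HD 0 (Rle_refl 0) eps Heps) as [del [Hdel H]].
      exists (mkposreal _ Hdel). simpl. intros h Hh Hha.
      rewrite (Rmax_left 0 0), (Rmin_left 0 0) by lra.
      destruct (Rlt_le_dec 0 h) as [Hp|Hn].
      * rewrite Rmax_right, Rmin_left by lra.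
        rewrite Rplus_0_l.
        replace (D h + 0 * D1 0 - (D 0 + 0 * D1 0)) with (D (0 + h) - D 0) by (rewrite Rplus_0_l; ring).
        apply H; auto; lra.
      * rewrite Rplus_0_l. rewrite Rmax_left, Rmin_right by lra.
        replace ((D 0 + h * D1 0 - (D 0 + 0 * D1 0)) / h - D1 0) with 0 by (field; auto).
        rewrite Rabs_R0; auto.
Qed.

Lemma is_derive_deriv_Rplus f f' : (forall t, is_derive f t (f' t)) -> deriv_Rplus f f'.
Proof.
  intros H t _ eps Heps. destruct (proj1 (is_derive_Reals _ _ _) (H t) eps Heps) as [del Hd].
  exists del; split; [apply cond_pos|]. intros h Hh Hha _. apply Hd; auto.
Qed.

Definition V (th K : R -> R) (x : R) : R := RInt (fun s => th s * K (x - s)) 0 x.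

Lemma ex_V th K a b x : contR th -> contR K -> ex_RInt (fun s => th s * K (x - s)) a b.
Proof.
  intros H1 H2. apply exRI. intros t. apply cpt_mult; auto. apply cpt_shift; auto.
Qed.

Lemma derive_partial th K K' t u : is_derive K (u - t) (K' (u - t)) ->
  is_derive (fun z => th t * K (z - t)) u (th t * K' (u - t)).
Proof.
  intros H. apply is_derive_scal.
  assert (Hg : is_derive (fun z => z - t) u 1).
  { auto_derive; auto; ring. }
  pose proof (is_derive_comp K (fun z => z - t) u (K' (u - t)) 1 H Hg) as Hc.
  simpl in Hc. unfold scal in Hc; simpl in Hc. unfold mult in Hc; simpl in Hc.
  rewrite Rmult_1_l in Hc. exact Hc.
Qed.

Lemma LEIB th K K' : contR th -> (forall t, is_derive K t (K' t)) -> contR K' ->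
  forall x, is_derive (V th K) x (V th K' x + th x * K 0).
Proof.
  intros Hth HK HK' x.
  assert (HKc : contR K) by (intro t; apply (cpt_of_derive K t (K' t)); auto).
  assert (HDer : forall u t, Derive (fun z => th t * K (z - t)) u = th t * K' (u - t)).
  { intros u t. apply is_derive_unique. apply derive_partial. apply HK. }
  assert (Hc2 : forall u v, continuity_2d_pt (fun u v => Derive (fun z => th v * K (z - v)) u) u v).
  { intros u v. apply continuity_2d_pt_ext with (f := fun u v => th v * K' (u - v)).
    intros; rewrite HDer; auto.
    apply continuity_2d_pt_mult.
    apply continuity_1d_2d_pt_comp with (g := fun _ v => v). apply Hth. apply continuity_2d_pt_id2.
    apply continuity_1d_2d_pt_comp with (g := fun u v => u - v). apply HK'.
    apply continuity_2d_pt_minus; [apply continuity_2d_pt_id1|apply continuity_2d_pt_id2]. }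
  assert (Hl2 : forall x0 y0, locally_2d (fun u v => continuity_2d_pt (fun u v => Derive (fun z => th v * K (z - v)) u) u v) x0 y0).
  { intros x0 y0. exists (mkposreal 1 Rlt_0_1). intros; apply Hc2. }
  pose proof (is_derive_RInt_param_bound_comp (fun u t => th t * K (u - t)) (fun _ => 0) (fun z => z) x 0 1) as H.
  simpl in H.
  assert (E : V th K' x + th x * K 0 = RInt (fun t => Derive (fun u => th t * K (u - t)) x) 0 x
      + - (th 0 * K (x - 0)) * 0 + th x * K (x - x) * 1).
  { rewrite (RInt_ext (fun t => Derive (fun u => th t * K (u - t)) x) (fun s => th s * K' (x - s))).
    2: { intros; apply HDer. }
    unfold V. rewrite Rminus_diag. ring. }
  rewrite E. unfold V. apply H.
  - apply filter_forall. intros y0. apply ex_V; auto.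
  - exists (mkposreal 1 Rlt_0_1). apply filter_forall. intros y0. apply ex_V; auto.
  - exists (mkposreal 1 Rlt_0_1). apply filter_forall. intros y0. apply ex_V; auto.
  - exact (is_derive_const 0 x).
  - exact (is_derive_id x).
  - exists (mkposreal 1 Rlt_0_1). apply filter_forall. intros y0 t _. exists (th t * K' (y0 - t)).
    apply derive_partial; apply HK.
  - intros t _. apply Hc2.
  - apply Hl2.
  - apply Hl2.
  - apply cpt_mult; [apply Hth| apply cpt_shift; apply HKc].
  - apply cpt_mult; [apply Hth| apply cpt_shift; apply HKc].
Qed.

Lemma bound_compact f a b : contR f -> a <= b ->
  exists M, 0 <= M /\ forall t, a <= t <= b -> Rabs (f t) <= M.
Proof.
  intros Hf Hab.
  destruct (continuity_ab_maj (fun t => Rabs (f t)) a b Hab) as [Mx [H1 H2]].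
  { intros c _. apply cpt_abs; apply Hf. }
  exists (Rabs (f Mx)); split; [apply Rabs_pos|]. intros t Ht; apply H1; auto.
Qed.

Lemma contR_abs u : contR u -> contR (fun s => Rabs (u s)).
Proof. intros H t; apply cpt_abs; apply H. Qed.

Lemma V_est u K M t : contR u -> contR K -> 0 <= t ->
  (forall s, 0 <= s <= t -> Rabs (K s) <= M) ->
  Rabs (V u K t) <= M * RInt (fun s => Rabs (u s)) 0 t.
Proof.
  intros Hu HK Ht HM. unfold V.
  eapply Rle_trans; [apply abs_RInt_le; auto; apply ex_V; auto|].
  assert (E : M * RInt (fun s => Rabs (u s)) 0 t = RInt (fun s => M * Rabs (u s)) 0 t).
  { symmetry. apply (RInt_scal (V:=R_CompleteNormedModule) (fun s => Rabs (u s)) 0 t M).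
    apply exRI; apply contR_abs; auto. }
  rewrite E. apply RInt_le; auto.
  - apply exRI. apply contR_abs. intro s. apply cpt_mult; [apply Hu| apply cpt_shift; apply HK].
  - apply exRI. intro s. apply cpt_mult; [apply cpt_const| apply cpt_abs; apply Hu].
  - intros s Hs. rewrite Rabs_mult, (Rmult_comm M). apply Rmult_le_compat_l; [apply Rabs_pos|].
    apply HM; lra.
Qed.

Lemma V_est_const u K M e t : contR u -> contR K -> 0 <= t ->
  (forall s, 0 <= s <= t -> Rabs (K s) <= M) ->
  (forall s, 0 <= s <= t -> Rabs (u s) <= e) ->
  Rabs (V u K t) <= t * (e * M).
Proof.
  intros Hu HK Ht HM He. unfold V.
  replace t with (t - 0) at 2 by ring.
  apply abs_RInt_le_const; auto. apply ex_V; auto.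
  intros s Hs. rewrite Rabs_mult. assert (0 <= Rabs (u s)) by apply Rabs_pos.
  assert (0 <= Rabs (K (t - s))) by apply Rabs_pos.
  apply Rmult_le_compat; auto. apply HM; lra.
Qed.

Lemma poly_int n t : RInt (fun s => s ^ n) 0 t = t ^ (S n) / INR (S n).
Proof.
  assert (HN : INR (S n) <> 0) by (apply not_0_INR; lia).
  apply is_RInt_unique.
  replace (t ^ S n / INR (S n)) with (minus ((fun s => / INR (S n) * s ^ (S n)) t) ((fun s => / INR (S n) * s ^ (S n)) 0)).
  2: { simpl. unfold minus, plus, opp; simpl. field. auto. }
  apply (is_RInt_derive (V:=R_CompleteNormedModule) (fun s => / INR (S n) * s ^ (S n)) (fun s => s ^ n)).
  - intros x _. 
    assert (H := is_derive_scal (fun s => s ^ S n) x (/ INR (S n)) _ (is_derive_pow (fun s => s) (S n) x 1 (is_derive_id x))).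
    simpl in H. replace (x ^ n) with (/ INR (S n) * (INR (S n) * 1 * x ^ n)) by (field; auto). exact H.
  - intros x _. apply continuity_pt_filterlim.
    apply (cpt_of_derive (fun s => s ^ n) x (INR n * 1 * x ^ pred n)).
    apply (is_derive_pow (fun s => s) n x 1 (is_derive_id x)).
Qed.

Lemma iter_bound (u : nat -> R -> R) T A L :
  (forall n, contR (u n)) -> 0 <= L ->
  (forall t, 0 <= t <= T -> Rabs (u O t) <= A) ->
  (forall n t, 0 <= t <= T -> Rabs (u (S n) t) <= L * RInt (fun s => Rabs (u n s)) 0 t) ->
  forall n t, 0 <= t <= T -> Rabs (u n t) <= A * (L * t) ^ n / INR (Factorial.fact n).
Proof.
  intros Hc HL H0 HS n. induction n; intros t Ht.
  - simpl. replace (A * 1 / 1) with A by field. auto.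
  - eapply Rle_trans; [apply HS; auto|].
    set (c := A * L ^ n / INR (Factorial.fact n)).
    assert (Hle : RInt (fun s => Rabs (u n s)) 0 t <= RInt (fun s => c * s ^ n) 0 t).
    { apply RInt_le; [lra| apply exRI; apply contR_abs; auto| |].
      apply exRI; intro s; apply cpt_mult; [apply cpt_const|].
      apply (cpt_of_derive (fun s => s ^ n) s (INR n * 1 * s ^ pred n)).
      apply (is_derive_pow (fun s => s) n s 1 (is_derive_id s)).
      intros s Hs. eapply Rle_trans; [apply IHn; lra|].
      unfold c. rewrite Rpow_mult_distr. right; field. apply INR_fact_neq_0. }
    assert (E : RInt (fun s => c * s ^ n) 0 t = c * (t ^ S n / INR (S n))).
    { rewrite <- poly_int. apply (RInt_scal (V:=R_CompleteNormedModule) (fun s => s ^ n) 0 t c).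
      apply exRI; intro s. apply (cpt_of_derive (fun s => s ^ n) s (INR n * 1 * s ^ pred n)).
      apply (is_derive_pow (fun s => s) n s 1 (is_derive_id s)). }
    rewrite E in Hle.
    eapply Rle_trans; [apply Rmult_le_compat_l; [exact HL| exact Hle]|].
    unfold c. rewrite fact_simpl, mult_INR. rewrite Rpow_mult_distr. rewrite <- (tech_pow_Rmult L n).
    right. field. split; [apply INR_fact_neq_0| apply not_0_INR; lia].
Qed.

Lemma gronwall u T L : contR u -> 0 <= L ->
  (forall t, 0 <= t <= T -> Rabs (u t) <= L * RInt (fun s => Rabs (u s)) 0 t) ->
  forall t, 0 <= t <= T -> u t = 0.
Proof.
  intros Hu HL H t Ht.
  destruct (bound_compact u 0 T Hu ltac:(lra)) as [A [HA HAb]].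
  pose proof (iter_bound (fun _ => u) T A L (fun _ => Hu) HL HAb (fun _ => H)) as HB.
  destruct (Req_dec (u t) 0) as [E|Hne]; auto. exfalso.
  assert (Hp : 0 < Rabs (u t)) by (apply Rabs_pos_lt; auto).
  destruct (cv_speed_pow_fact (L * t) (Rabs (u t) / (A + 1))) as [N HN].
  { apply Rdiv_lt_0_compat; lra. }
  specialize (HN N (le_n N)). specialize (HB N t Ht).
  unfold Rdist in HN. rewrite Rminus_0_r in HN.
  assert (Hx : 0 <= (L * t) ^ N / INR (Factorial.fact N)).
  { apply Rdiv_le_0_compat. apply pow_le. apply Rmult_le_pos; lra. apply INR_fact_lt_0. }
  rewrite Rabs_right in HN by lra.
  assert (A * ((L * t) ^ N / INR (Factorial.fact N)) <= A * (Rabs (u t) / (A + 1))) by (apply Rmult_le_compat_l; lra).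
  assert (A * (Rabs (u t) / (A + 1)) < Rabs (u t)).
  { apply Rmult_lt_reg_r with (A + 1); [lra|]. unfold Rdiv. 
    replace (A * (Rabs (u t) * / (A + 1)) * (A + 1)) with (A * Rabs (u t)) by (field; lra). nra. }
  unfold Rdiv in *. rewrite <- Rmult_assoc in H0. lra.
Qed.

Lemma V_minus f h K t : contR f -> contR h -> contR K ->
  V f K t - V h K t = V (fun s => f s - h s) K t.
Proof.
  intros Hf Hh HK. unfold V.
  transitivity (minus (RInt (fun s => f s * K (t - s)) 0 t) (RInt (fun s => h s * K (t - s)) 0 t)); [reflexivity|].
  rewrite <- (RInt_minus (V:=R_CompleteNormedModule)); [| apply ex_V; auto | apply ex_V; auto].
  apply RInt_ext. intros x _. unfold minus, plus, opp; simpl. ring.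
Qed.

Lemma continuity_pt_elim f t : continuity_pt f t ->
  forall eps, 0 < eps -> exists del, 0 < del /\ forall s, Rabs (s - t) < del -> Rabs (f s - f t) < eps.
Proof.
  intros H eps Heps. destruct (H eps Heps) as [del [Hd Hs]].
  exists del; split; auto. intros s Hst.
  destruct (Req_dec s t) as [->|Hne]. rewrite Rminus_diag, Rabs_R0; auto.
  apply Hs. split. split. exact I. auto. exact Hst.
Qed.

Lemma contR_V f K K' : contR f -> (forall t, is_derive K t (K' t)) -> contR K' -> contR (V f K).
Proof.
  intros Hf HK HK' t. eapply cpt_of_derive. apply LEIB; eauto.
Qed.

Lemma rsum_sum f n : rsum (S n) f = sum_f_R0 f n.
Proof.
  induction n. simpl; ring. change (rsum (S (S n)) f) with (rsum (S n) f + f (S n)).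
  rewrite IHn. reflexivity.
Qed.

Definition cexp (x : R) (i : nat) := / INR (Factorial.fact i) * x ^ i.

Lemma rsum_cauchy x : forall eps, 0 < eps -> exists N, forall n m, (N <= n)%nat -> (n <= m)%nat ->
  rsum m (cexp x) - rsum n (cexp x) < eps.
Proof.
  intros eps Heps.
  assert (Hin : exp_in x (exp x)) by (unfold exp; destruct (exist_exp x); auto).
  destruct (Hin (eps / 2) ltac:(lra)) as [N HN].
  exists (S N). intros n m Hn Hm.
  destruct n as [|n]; [lia|]. destruct m as [|m]; [lia|].
  unfold cexp. rewrite !rsum_sum.
  assert (H1 := HN n ltac:(lia)). assert (H2 := HN m ltac:(lia)).
  unfold Rdist in *. unfold Rabs in *. repeat destruct Rcase_abs; lra.
Qed.

Fixpoint pic (g K : R -> R) (k0 : R) (n : nat) : R -> R :=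
  match n with
  | O => g
  | S m => fun t => g t - / k0 * V (pic g K k0 m) K t
  end.

Section Picard.
Variables (g K K' : R -> R) (k0 : R).
Hypotheses (Hg : contR g) (HK : forall t, is_derive K t (K' t)) (HK' : contR K') (Hk0 : k0 <> 0).

Lemma HKc : contR K.
Proof. intro t; apply (cpt_of_derive K t (K' t)); auto. Qed.

Lemma pic_cont n : contR (pic g K k0 n).
Proof.
  induction n; simpl; auto. intro t. apply cpt_minus; auto.
  apply cpt_mult; [apply cpt_const|]. apply (contR_V _ K K'); auto.
Qed.

Lemma pic_diff_bound T : 0 <= T -> exists A, 0 <= A /\ exists L, 0 <= L /\
  forall n t, 0 <= t <= T -> Rabs (pic g K k0 (S n) t - pic g K k0 n t) <= A * cexp (L * T) n.
Proof.
  intros HT.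
  destruct (bound_compact K 0 T HKc HT) as [M [HM HMb]].
  set (u := fun n t => pic g K k0 (S n) t - pic g K k0 n t).
  assert (Huc : forall n, contR (u n)) by (intros n t; apply cpt_minus; apply pic_cont).
  destruct (bound_compact (u O) 0 T (Huc O) HT) as [A [HA HAb]].
  exists A; split; auto. exists (M / Rabs k0). 
  assert (Hk : 0 < Rabs k0) by (apply Rabs_pos_lt; auto).
  assert (HL : 0 <= M / Rabs k0) by (apply Rdiv_le_0_compat; lra).
  split; auto.
  assert (HS : forall m s, 0 <= s <= T -> Rabs (u (S m) s) <= M / Rabs k0 * RInt (fun s0 => Rabs (u m s0)) 0 s).
  { intros m s Hs. unfold u. simpl.
    replace (g s - / k0 * V (fun t0 => g t0 - / k0 * V (pic g K k0 m) K t0) K s - (g s - / k0 * V (pic g K k0 m) K s))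
      with (- / k0 * (V (fun t0 => g t0 - / k0 * V (pic g K k0 m) K t0) K s - V (pic g K k0 m) K s)) by ring.
    rewrite V_minus; [| exact (pic_cont (S m)) | apply pic_cont | apply HKc].
    rewrite Rabs_mult, Rabs_Ropp, Rabs_inv.
    unfold Rdiv; rewrite (Rmult_comm M), Rmult_assoc.
    apply Rmult_le_compat_l. left; apply Rinv_0_lt_compat; auto.
    apply V_est; [exact (Huc m) | apply HKc | lra|]. intros; apply HMb; lra. }
  assert (HB := iter_bound u T A (M / Rabs k0) Huc HL HAb HS).
  intros n t Ht.
  eapply Rle_trans; [apply (HB n t Ht)|].
  - unfold cexp. unfold Rdiv. rewrite Rmult_assoc. apply Rmult_le_compat_l; auto.
    rewrite Rmult_comm. apply Rmult_le_compat_l. left; apply Rinv_0_lt_compat, INR_fact_lt_0.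
    apply pow_incr. split. apply Rmult_le_pos; lra. apply Rmult_le_compat_l; lra.
Qed.

Lemma pic_tele T : 0 <= T -> exists A, 0 <= A /\ exists L, 0 <= L /\
  forall n k t, 0 <= t <= T ->
   Rabs (pic g K k0 (n + k) t - pic g K k0 n t) <= A * (rsum (n + k) (cexp (L * T)) - rsum n (cexp (L * T))).
Proof.
  intros HT. destruct (pic_diff_bound T HT) as [A [HA [L [HL H]]]].
  exists A; split; auto; exists L; split; auto.
  intros n k t Ht. induction k.
  - rewrite Nat.add_0_r, !Rminus_diag, Rabs_R0. lra.
  - rewrite Nat.add_succ_r. simpl rsum.
    replace (pic g K k0 (S (n + k)) t - pic g K k0 n t) with
      ((pic g K k0 (S (n + k)) t - pic g K k0 (n + k) t) + (pic g K k0 (n + k) t - pic g K k0 n t)) by ring.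
    eapply Rle_trans; [apply Rabs_triang|].
    specialize (H (n + k)%nat t Ht). lra.
Qed.

Lemma pic_UC T : 0 <= T -> forall eps, 0 < eps -> exists N, forall n m, (N <= n)%nat -> (n <= m)%nat ->
  forall t, 0 <= t <= T -> Rabs (pic g K k0 m t - pic g K k0 n t) <= eps.
Proof.
  intros HT eps Heps. destruct (pic_tele T HT) as [A [HA [L [HL H]]]].
  destruct (rsum_cauchy (L * T) (eps / (A + 1)) ltac:(apply Rdiv_lt_0_compat; lra)) as [N HN].
  exists N. intros n m Hn Hm t Ht.
  replace m with (n + (m - n))%nat by lia.
  eapply Rle_trans; [apply H; auto|].
  specialize (HN n (n + (m - n))%nat Hn ltac:(lia)).
  apply Rle_trans with (A * (eps / (A + 1))). apply Rmult_le_compat_l; lra.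
  unfold Rdiv. apply Rmult_le_reg_r with (A + 1); [lra|].
  replace (A * (eps * / (A + 1)) * (A + 1)) with (A * eps) by (field; lra). nra.
Qed.

Definition theta (t : R) : R := real (Lim_seq (fun n => pic g K k0 n t)).

Lemma theta_lim t : 0 <= t -> is_lim_seq (fun n => pic g K k0 n t) (theta t).
Proof.
  intros Ht. unfold theta. apply Lim_seq_correct'. apply ex_lim_seq_cauchy_corr.
  intros [eps Heps]. simpl.
  destruct (pic_UC t Ht (eps / 2) ltac:(lra)) as [N HN]. exists N. intros n m Hn Hm.
  destruct (Nat.le_ge_cases n m) as [Hnm|Hnm].
  - rewrite <- Rabs_Ropp. replace (- (pic g K k0 n t - pic g K k0 m t)) with (pic g K k0 m t - pic g K k0 n t) by ring.
    specialize (HN n m Hn Hnm t ltac:(lra)). lra.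
  - specialize (HN m n Hm Hnm t ltac:(lra)). lra.
Qed.

Lemma theta_UC T : 0 <= T -> forall eps, 0 < eps -> exists N, forall n, (N <= n)%nat ->
  forall t, 0 <= t <= T -> Rabs (theta t - pic g K k0 n t) <= eps.
Proof.
  intros HT eps Heps. destruct (pic_UC T HT eps Heps) as [N HN]. exists N.
  intros n Hn t Ht. apply le_epsilon. intros e He.
  pose proof (proj1 (is_lim_seq_Reals _ _) (theta_lim t ltac:(lra)) e He) as [N' HN'].
  specialize (HN' (Nat.max n N') (Nat.le_max_r _ _)). unfold Rdist in HN'.
  specialize (HN n (Nat.max n N') Hn (Nat.le_max_l _ _) t Ht).
  replace (theta t - pic g K k0 n t) with (- (pic g K k0 (Nat.max n N') t - theta t) + (pic g K k0 (Nat.max n N') t - pic g K k0 n t)) by ring.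
  eapply Rle_trans; [apply Rabs_triang|]. rewrite Rabs_Ropp. lra.
Qed.

Lemma theta_cont : cont_Rplus theta.
Proof.
  intros t0 Ht0 eps Heps.
  destruct (theta_UC (t0 + 1) ltac:(lra) (eps / 3) ltac:(lra)) as [N HN].
  destruct (continuity_pt_elim _ _ (pic_cont N t0) (eps / 3) ltac:(lra)) as [del [Hdel Hc]].
  exists (Rmin del 1). split. apply Rmin_pos; lra.
  intros s Hs Hst. assert (Hm1 := Rmin_l del 1). assert (Hm2 := Rmin_r del 1).
  assert (Hs1 : s <= t0 + 1) by (unfold Rabs in Hst; destruct Rcase_abs in Hst; lra).
  assert (H1 := HN N (le_n N) s ltac:(lra)).
  assert (H2 := HN N (le_n N) t0 ltac:(lra)).
  assert (H3 := Hc s ltac:(lra)).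
  replace (theta s - theta t0) with ((theta s - pic g K k0 N s) + (pic g K k0 N s - pic g K k0 N t0) - (theta t0 - pic g K k0 N t0)) by ring.
  unfold Rminus at 1. eapply Rle_lt_trans; [apply Rabs_triang|]. rewrite Rabs_Ropp.
  eapply Rle_lt_trans; [apply Rplus_le_compat_r; apply Rabs_triang|]. lra.
Qed.

Lemma zero_of_small x C : 0 <= C -> (forall e, 0 < e -> Rabs x <= e * C) -> x = 0.
Proof.
  intros HC H. destruct (Req_dec x 0) as [E|Hne]; auto. exfalso.
  assert (Hp : 0 < Rabs x) by (apply Rabs_pos_lt; auto).
  specialize (H (Rabs x / (2 * (C + 1))) ltac:(apply Rdiv_lt_0_compat; lra)).
  assert (Rabs x / (2 * (C + 1)) * C < Rabs x).
  { apply Rmult_lt_reg_r with (2 * (C + 1)); [lra|].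
    replace (Rabs x / (2 * (C + 1)) * C * (2 * (C + 1))) with (Rabs x * C) by (field; lra). nra. }
  lra.
Qed.

Lemma theta_eq t : 0 <= t -> theta t = g t - / k0 * V (fun s => theta (Rmax 0 s)) K t.
Proof.
  intros Ht.
  destruct (bound_compact K 0 t HKc Ht) as [M [HM HMb]].
  assert (Hk : 0 < Rabs k0) by (apply Rabs_pos_lt; auto).
  apply Rminus_diag_uniq.
  apply (zero_of_small _ (1 + t * M / Rabs k0)).
  { assert (0 <= t * M / Rabs k0) by (apply Rdiv_le_0_compat; [apply Rmult_le_pos|]; lra). lra. }
  intros e He. destruct (theta_UC t Ht e He) as [N HN].
  assert (H1 := HN (S N) (le_S _ _ (le_n N)) t ltac:(lra)). simpl pic in H1.
  assert (Hext : contR (fun s => theta (Rmax 0 s))) by (intro s; apply (cont_ext theta theta_cont)).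
  assert (H2 : Rabs (V (fun s => theta (Rmax 0 s)) K t - V (pic g K k0 N) K t) <= t * (e * M)).
  { rewrite V_minus; auto; [| apply pic_cont | apply HKc].
    apply (V_est_const _ K M e t); auto.
    intro s; apply cpt_minus; [apply Hext| apply pic_cont]. apply HKc.
    intros s Hs. rewrite Rmax_right by lra. apply HN; auto; lra. }
  replace (theta t - (g t - / k0 * V (fun s => theta (Rmax 0 s)) K t)) with
    ((theta t - (g t - / k0 * V (pic g K k0 N) K t)) + / k0 * (V (fun s => theta (Rmax 0 s)) K t - V (pic g K k0 N) K t)) by ring.
  eapply Rle_trans; [apply Rabs_triang|]. rewrite Rabs_mult, Rabs_inv.
  assert (/ Rabs k0 * Rabs (V (fun s => theta (Rmax 0 s)) K t - V (pic g K k0 N) K t) <= / Rabs k0 * (t * (e * M))).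
  { apply Rmult_le_compat_l; auto. left; apply Rinv_0_lt_compat; auto. }
  replace (e * (1 + t * M / Rabs k0)) with (e + / Rabs k0 * (t * (e * M))) by (field; lra). lra.
Qed.

End Picard.

Lemma RInt_conv f a b : ex_RInt f a b -> Defs.RInt f a b = RInt f a b.
Proof.
  intros H. unfold Defs.RInt.
  set (P := fun v => exists pr : Riemann_integrable f a b, RiemannInt pr = v).
  assert (HP : exists v, P v).
  { exists (RiemannInt (ex_RInt_Reals_0 f a b H)). exists (ex_RInt_Reals_0 f a b H); auto. }
  destruct (epsilon_spec (inhabits 0) P HP) as [pr Hpr].
  rewrite <- Hpr. symmetry. apply RInt_Reals.
Qed.

Lemma deriv_Rplus_ext f g f' : deriv_Rplus f f' -> (forall t, 0 <= t -> f t = g t) -> deriv_Rplus g f'.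
Proof.
  intros H E t Ht eps Heps. destruct (H t Ht eps Heps) as [del [Hd Hh]].
  exists del; split; auto. intros h H1 H2 H3. rewrite <- !E by lra. apply Hh; auto.
Qed.

Lemma cont_Rplus_of_contR f g : contR f -> (forall t, 0 <= t -> f t = g t) -> cont_Rplus g.
Proof.
  intros H E t Ht eps Heps. destruct (continuity_pt_elim f t (H t) eps Heps) as [del [Hd Hs]].
  exists del; split; auto. intros s Hs0 Hst. rewrite <- !E by lra. apply Hs; auto.
Qed.

Lemma deriv_Rplus_zero : deriv_Rplus (fun _ => 0) (fun _ => 0).
Proof.
  intros t _ eps Heps. exists 1; split; [lra|]. intros h Hh _ _.
  replace ((0 - 0) / h - 0) with 0 by (field; auto). rewrite Rabs_R0; auto.
Qed.

Lemma deriv_equal f f1 g g1 : deriv_Rplus f f1 -> deriv_Rplus g g1 ->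
  (forall t, 0 <= t -> f1 t = g1 t) -> f 0 = g 0 -> forall t, 0 <= t -> f t = g t.
Proof.
  intros Hf Hg E E0 t Ht.
  set (phi := fun t => f (Rmax 0 t) - g (Rmax 0 t)).
  assert (Hc : contR phi).
  { intro s. apply cpt_minus; apply cont_ext; eapply deriv_Rplus_cont; eauto. }
  destruct (Rle_lt_or_eq_dec _ _ Ht) as [Ht'|<-]; auto.
  destruct (MVT_gen phi 0 t (fun _ => 0)) as [c [_ Hc']].
  - rewrite Rmin_left, Rmax_right by lra. intros x Hx. apply is_derive_Reals.
    intros eps Heps.
    destruct (Hf x ltac:(lra) (eps / 2) ltac:(lra)) as [d1 [Hd1 H1]].
    destruct (Hg x ltac:(lra) (eps / 2) ltac:(lra)) as [d2 [Hd2 H2]].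
    assert (Hp : 0 < Rmin d1 (Rmin d2 x)) by (repeat apply Rmin_pos; lra).
    exists (mkposreal _ Hp). simpl. intros h Hh Hha.
    assert (Hm1 := Rmin_l d1 (Rmin d2 x)). assert (Hm2 := Rmin_r d1 (Rmin d2 x)).
    assert (Hm3 := Rmin_l d2 x). assert (Hm4 := Rmin_r d2 x).
    assert (Hxh : 0 < x + h) by (unfold Rabs in Hha; destruct Rcase_abs in Hha; lra).
    unfold phi. rewrite !Rmax_right by lra.
    specialize (H1 h Hh ltac:(lra) ltac:(lra)). specialize (H2 h Hh ltac:(lra) ltac:(lra)).
    rewrite E in H1 by lra.
    replace ((f (x + h) - g (x + h) - (f x - g x)) / h - 0) with
      (((f (x + h) - f x) / h - g1 x) - ((g (x + h) - g x) / h - g1 x)) by (field; auto).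
    unfold Rminus at 1. eapply Rle_lt_trans; [apply Rabs_triang|]. rewrite Rabs_Ropp. lra.
  - rewrite Rmin_left, Rmax_right by lra. intros x _. apply Hc.
  - unfold phi in Hc'. rewrite Rmax_right in Hc' by lra. rewrite Rmax_left in Hc' by lra. lra.
Qed.

Lemma cpt_plus f g t : continuity_pt f t -> continuity_pt g t -> continuity_pt (fun x => f x + g x) t.
Proof. intros; apply (continuity_pt_plus f g t); auto. Qed.

Theorem mainTheorem5
  (d : nat) (Hd : (1 <= d)%nat)
  (Y : Type)
  (a : Y -> nat -> nat -> R) (b : Y -> nat -> R)
  (alpha : Y -> nat -> nat -> nat -> R) (beta : Y -> nat -> nat -> R)
  (Ha : forall y, symmetric_psd d (a y))
  (Halpha : forall y i, (i < d)%nat -> symmetric_psd d (alpha y i))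
  (lam : nat -> R) (Hlam : dot d lam e1 <> 0)
  (y : Y)
  (Phi : R -> R) (Psi : R -> nat -> R) (dPhi : R -> R) (dPsi : R -> nat -> R)
  (HPhi_smooth : Cinf_Rplus Phi)
  (HPsi_smooth : forall i, (i < d)%nat -> Cinf_Rplus (fun t => Psi t i))
  (HdPhi : deriv_Rplus Phi dPhi)
  (HdPsi : forall i, (i < d)%nat -> deriv_Rplus (fun t => Psi t i) (fun t => dPsi t i))
  (HPhi0 : Phi 0 = 0)
  (HPsi0 : forall i, (i < d)%nat -> Psi 0 i = 0)
  (HPhi_ode : forall t, 0 <= t -> dPhi t = quadf d (a y) (b y) (Psi t))
  (HPsi_ode : forall t i, 0 <= t -> (i < d)%nat ->
       dPsi t i = quadf d (alpha y i) (beta y i) (Psi t) - lam i) :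
  let I := volterra (fun t => dot d (dPsi t) e1) in
  (* well defined: C(R_+) -> {h in C^1(R_+) : h(0) = 0} *)
  (forall theta : R -> R, cont_Rplus theta ->
     (forall tau, 0 <= tau ->
        exists pr : Riemann_integrable
          (fun s => theta s * dot d (dPsi (tau - s)) e1) 0 tau, True) /\
     C1_Rplus (I theta) /\ I theta 0 = 0) /\
  (* injective *)
  (forall theta1 theta2 : R -> R, cont_Rplus theta1 -> cont_Rplus theta2 ->
     (forall tau, 0 <= tau -> I theta1 tau = I theta2 tau) ->
     forall s, 0 <= s -> theta1 s = theta2 s) /\
  (* surjective *)
  (forall h : R -> R, C1_Rplus h -> h 0 = 0 ->
     exists theta : R -> R, cont_Rplus theta /\
       forall tau, 0 <= tau -> I theta tau = h tau).
Proof.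
  intros I.
  assert (Hd0 : (0 < d)%nat) by lia.
  destruct (HPsi_smooth O Hd0) as [D [HD0 HDd]].
  assert (HdPsi0 := HdPsi O Hd0).
  assert (Hk : forall t, 0 <= t -> dot d (dPsi t) e1 = D 1%nat t).
  { intros t Ht. rewrite dot_e1 by auto.
    apply (deriv_Rplus_unique (fun t => Psi t O) (fun t => dPsi t O) (D O) (D 1%nat)); auto.
    intros; symmetry; auto. }
  set (k0 := D 1%nat 0).
  assert (Hk0 : k0 <> 0).
  { unfold k0. rewrite <- Hk by lra. rewrite dot_e1 by auto.
    rewrite HPsi_ode by (auto; lra). rewrite quadf_zero by auto.
    rewrite dot_e1 in Hlam by auto. lra. }
  set (K1 := Eext (D 1%nat) (D 2%nat)).
  set (K1' := fun t => D 2%nat (Rmax 0 t)).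
  set (K2 := Eext (D 2%nat) (D 3%nat)).
  set (K2' := fun t => D 3%nat (Rmax 0 t)).
  assert (HK1 : forall t, is_derive K1 t (K1' t)) by (apply Eext_deriv; apply HDd).
  assert (HK2 : forall t, is_derive K2 t (K2' t)) by (apply Eext_deriv; apply HDd).
  assert (HK1' : contR K1') by (intro t; apply cont_ext; eapply deriv_Rplus_cont; apply HDd).
  assert (HK2' : contR K2') by (intro t; apply cont_ext; eapply deriv_Rplus_cont; apply HDd).
  assert (HK1c : contR K1) by (intro t; eapply cpt_of_derive; apply HK1).
  assert (HK2c : contR K2) by (intro t; eapply cpt_of_derive; apply HK2).
  assert (HK10 : K1 0 = k0).
  { unfold K1, Eext, k0. rewrite Rmax_left, Rmin_left by lra. ring. }
  assert (HK12 : forall th x, 0 <= x -> V th K1' x = V th K2 x).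
  { intros th x Hx. unfold V. apply RInt_ext. intros s Hs.
    rewrite Rmin_left, Rmax_right in Hs by lra. unfold K1', K2, Eext.
    rewrite Rmax_right, Rmin_left by lra. simpl. ring. }
  assert (CONV : forall theta, cont_Rplus theta -> forall x, 0 <= x ->
     ex_RInt (fun s => theta s * dot d (dPsi (x - s)) e1) 0 x /\
     I theta x = V (fun s => theta (Rmax 0 s)) K1 x).
  { intros theta Hth x Hx.
    assert (Hext : contR (fun s => theta (Rmax 0 s))) by (intro s; apply cont_ext; auto).
    assert (E : forall s, Rmin 0 x < s < Rmax 0 x ->
        theta (Rmax 0 s) * K1 (x - s) = theta s * dot d (dPsi (x - s)) e1).
    { intros s Hs. rewrite Rmin_left, Rmax_right in Hs by lra.
      rewrite Hk by lra. unfold K1, Eext. rewrite !Rmax_right, Rmin_left by lra. ring. }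
    assert (Hex : ex_RInt (fun s => theta s * dot d (dPsi (x - s)) e1) 0 x).
    { eapply ex_RInt_ext; [apply E|]. apply ex_V; auto. }
    split; auto. unfold I, volterra. rewrite RInt_conv by auto. unfold V.
    symmetry. apply RInt_ext. apply E. }
  split; [|split].
  -
    intros theta Hth.
    assert (Hext : contR (fun s => theta (Rmax 0 s))) by (intro s; apply cont_ext; auto).
    split; [|split].
    + intros tau Htau. exists (ex_RInt_Reals_0 _ _ _ (proj1 (CONV theta Hth tau Htau))). auto.
    + exists (fun t => V (fun s => theta (Rmax 0 s)) K1' t + theta (Rmax 0 t) * K1 0). split.
      * apply deriv_Rplus_ext with (f := V (fun s => theta (Rmax 0 s)) K1).
        apply is_derive_deriv_Rplus. apply LEIB; auto.
        intros t Ht. symmetry. apply (CONV theta Hth t Ht).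
      * apply cont_Rplus_of_contR with (f := fun t => V (fun s => theta (Rmax 0 s)) K2 t + theta (Rmax 0 t) * K1 0).
        intro t. apply cpt_plus. apply (contR_V _ K2 K2'); auto.
        apply cpt_mult; [apply Hext| apply cpt_const].
        intros t Ht. rewrite HK12; auto.
    + rewrite (proj2 (CONV theta Hth 0 (Rle_refl 0))). unfold V. exact (RInt_point (V:=R_CompleteNormedModule) 0 _).
  -
    intros th1 th2 H1 H2 HI s Hs.
    set (del := fun s => th1 (Rmax 0 s) - th2 (Rmax 0 s)).
    assert (Hdel : contR del) by (intro t; apply cpt_minus; apply cont_ext; auto).
    assert (HV0 : forall x, 0 <= x -> V del K1 x = 0).
    { intros x Hx. unfold del. rewrite <- V_minus; try (intro t; apply cont_ext; auto); auto.
      rewrite <- (proj2 (CONV th1 H1 x Hx)), <- (proj2 (CONV th2 H2 x Hx)). rewrite HI; auto; ring. }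
    assert (Heq : forall t, 0 <= t -> V del K1' t + del t * K1 0 = 0).
    { apply (deriv_Rplus_unique (V del K1) _ (fun _ => 0) (fun _ => 0)).
      apply is_derive_deriv_Rplus. apply LEIB; auto. apply deriv_Rplus_zero. auto. }
    destruct (bound_compact K2 0 s HK2c Hs) as [M [HM HMb]].
    assert (Hk0p : 0 < Rabs k0) by (apply Rabs_pos_lt; auto).
    assert (Hz : del s = 0).
    { apply (gronwall del s (M / Rabs k0) Hdel); [apply Rdiv_le_0_compat; lra| |lra].
      intros t Ht.
      assert (E2 := Heq t ltac:(lra)). rewrite HK12, HK10 in E2 by lra.
      replace (del t) with (- / k0 * V del K2 t) by (field_simplify_eq; [lra|auto]).
      rewrite Rabs_mult, Rabs_Ropp, Rabs_inv.
      unfold Rdiv; rewrite (Rmult_comm M), Rmult_assoc.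
      apply Rmult_le_compat_l. left; apply Rinv_0_lt_compat; auto.
      apply V_est; auto; [lra|]. intros; apply HMb; lra. }
    unfold del in Hz. rewrite Rmax_right in Hz by lra. lra.
  -
    intros h [h' [Hh' Hh'c]] Hh0.
    set (g := fun t => h' (Rmax 0 t) / k0).
    assert (Hg : contR g).
    { intro t. unfold g, Rdiv. apply cpt_mult; [apply cont_ext; auto| apply cpt_const]. }
    set (th := theta g K2 k0).
    assert (Hth : cont_Rplus th) by (apply (theta_cont g K2 K2' k0); auto).
    assert (Hext : contR (fun s => th (Rmax 0 s))) by (intro s; apply cont_ext; auto).
    exists th. split; auto.
    intros tau Htau. rewrite (proj2 (CONV th Hth tau Htau)).
    apply (deriv_equal _ (fun t => V (fun s => th (Rmax 0 s)) K1' t + th (Rmax 0 t) * K1 0) h h'); auto.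
    + apply is_derive_deriv_Rplus. apply LEIB; auto.
    + intros t Ht. rewrite HK12, HK10, Rmax_right by lra.
      unfold th. rewrite (theta_eq g K2 K2' k0) by auto. fold th. unfold g.
      rewrite Rmax_right by lra. field. auto.
    + unfold V. rewrite RInt_point. rewrite Hh0. reflexivity.
Qed.
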